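(* Let $k$ be a positive integer and $y>1$ a real number. If $n$ is a $y$-friable positive integer with $n\le y^{(k+1)/2}$, then $n$ can be factored as $n=b_1b_2\cdots b_k$ with positive integers $b_j$ satisfying $b_j\le y$ for each $1\le j\le k$.
   Context: A positive integer $n$ is $y$-friable if every prime factor of $n$ is at most $y$. *)

(* Defs.v *)
From Stdlib Require Import Reals ZArith Znumtheory List.
Open Scope R_scope.

Definition friable (y : R) (n : nat) : Prop :=
  (0 < n)%nat /\
  forall p : nat, prime (Z.of_nat p) -> Nat.divide p n -> INR p <= y.

Definition prod_list (l : list nat) : nat := fold_right Nat.mul 1%nat l.

(* Main.v *)
Require Import Defs.
From Stdlib Require Import Reals ZArith Znumtheory List Lia Lra Psatz.
Open Scope R_scope.

Lemma friable_div (y : R) (n m : nat) :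
  friable y n -> (0 < m)%nat -> Nat.divide m n -> friable y m.
Proof.
  intros [Hn Hp] Hm Hd. split; [exact Hm|].
  intros p Pp Dp. apply Hp; [exact Pp|]. eapply Nat.divide_trans; eauto.
Qed.

Lemma split_nat (n : nat) : (1 < n)%nat -> ~ prime (Z.of_nat n) ->
  exists a b, (1 < a < n)%nat /\ (1 < b < n)%nat /\ n = (a * b)%nat.
Proof.
  intros H1 Hnp.
  destruct (not_prime_divide (Z.of_nat n)) as [z [Hz [q Hq]]]; [lia|exact Hnp|].
  assert (Hq0 : (0 < q)%Z) by nia.
  exists (Z.to_nat z), (Z.to_nat q).
  assert (E1 := Z2Nat.id z ltac:(lia)).
  assert (E2 := Z2Nat.id q ltac:(lia)).
  assert (Z.of_nat n = Z.of_nat (Z.to_nat z) * Z.of_nat (Z.to_nat q))%Z by nia.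
  rewrite <- Nat2Z.inj_mul in H. apply Nat2Z.inj in H.
  split; [|split]; nia.
Qed.

Lemma key (y : R) : 1 < y -> forall n, friable y n -> y < INR n ^ 2 ->
  exists d m, n = (d * m)%nat /\ y < INR d ^ 2 /\ INR d <= y.
Proof.
  intros Hy n. induction n as [n IH] using (well_founded_induction lt_wf).
  intros Hf Hlt.
  destruct (Rle_or_lt (INR n) y) as [Hle|Hgt].
  - exists n, 1%nat. split; [lia|]. split; assumption.
  - assert (Hn1 : (1 < n)%nat).
    { destruct Hf as [H0 _]. destruct (Nat.eq_dec n 1) as [->|]; [simpl in Hgt; lra|lia]. }
    destruct (prime_dec (Z.of_nat n)) as [Pn|NPn].
    + destruct Hf as [_ Hf]. specialize (Hf n Pn (Nat.divide_refl n)). lra.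
    + destruct (split_nat n Hn1 NPn) as [a [b [Ha [Hb E]]]].
      destruct (Rle_or_lt (INR a ^ 2) y) as [Ha2|Ha2].
      * destruct (Rle_or_lt (INR b ^ 2) y) as [Hb2|Hb2].
        -- exfalso. rewrite E, mult_INR in Hgt.
           assert (0 <= INR a) by apply pos_INR.
           assert (0 <= INR b) by apply pos_INR. nra.
        -- destruct (IH b ltac:(lia)) as [d [m [Em [Hd1 Hd2]]]]; auto.
           ++ apply (friable_div y n); [auto|lia|]. exists a. lia.
           ++ exists d, (m * a)%nat. split; [lia|auto].
      * destruct (IH a ltac:(lia)) as [d [m [Em [Hd1 Hd2]]]]; auto.
        -- apply (friable_div y n); [auto|lia|]. exists b. lia.
        -- exists d, (m * b)%nat. split; [lia|auto].
Qed.

Lemma main (y : R) : 1 < y -> forall k n, friable y n -> INR n ^ 2 <= y ^ (S (S k)) ->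
  exists b : list nat,
    length b = S k /\ prod_list b = n /\
    Forall (fun bj => (0 < bj)%nat /\ INR bj <= y) b.
Proof.
  intros Hy k. induction k as [|k IH]; intros n Hf Hn.
  - exists (n :: nil). simpl. split; [auto|]. split; [lia|].
    constructor; [|constructor]. split; [apply Hf|].
    assert (0 <= INR n) by apply pos_INR. simpl in Hn. nra.
  - destruct (Rle_or_lt (INR n) y) as [Hle|Hgt].
    + exists (n :: repeat 1%nat (S k)). simpl. split; [rewrite repeat_length; auto|].
      split.
      * assert (prod_list (repeat 1%nat k) = 1%nat).
        { clear. induction k; simpl; auto. unfold prod_list in *. simpl. lia. }
        unfold prod_list in *. simpl in *. lia.
      * constructor; [split; [apply Hf|exact Hle]|].
        apply Forall_forall. intros x Hx. apply (repeat_spec (S k)) in Hx. subst. split; [lia|simpl; lra].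
    + destruct (key y Hy n Hf) as [d [m [E [Hd1 Hd2]]]]; [nra|].
      destruct Hf as [Hn0 Hfp].
      assert (Hd0 : (0 < d)%nat) by lia.
      assert (Hm0 : (0 < m)%nat) by lia.
      destruct (IH m) as [b [Lb [Pb Fb]]].
      * apply (friable_div y n); [split; auto|lia|]. exists d. lia.
      * rewrite E, mult_INR in Hn.
        assert (0 <= INR m) by apply pos_INR.
        assert (0 < y ^ (S (S k))) by (apply pow_lt; lra).
        change (y ^ S (S (S k))) with (y * y ^ S (S k)) in Hn.
        destruct (Rle_or_lt (INR m ^ 2) (y ^ S (S k))) as [|Hc]; [auto|exfalso].
        assert (y * y ^ S (S k) < INR d ^ 2 * INR m ^ 2).
        { apply Rmult_le_0_lt_compat; lra. }
        nra.
      * exists (d :: b). simpl. split; [auto|]. split.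
        -- unfold prod_list in *. simpl. rewrite Pb. lia.
        -- constructor; auto.
Qed.

Theorem proposition3p1 (k : nat) (y : R) (n : nat) :
  (0 < k)%nat -> 1 < y ->
  friable y n ->
  INR n <= Rpower y ((INR k + 1) / 2) ->
  exists b : list nat,
    length b = k /\
    prod_list b = n /\
    Forall (fun bj => (0 < bj)%nat /\ INR bj <= y) b.
Proof.
  intros Hk Hy Hf Hn.
  destruct k as [|k]; [lia|].
  apply (main y Hy k n Hf).
  assert (0 <= INR n) by apply pos_INR.
  assert (E : Rpower y ((INR (S k) + 1) / 2) ^ 2 = y ^ (S (S k))).
  { rewrite <- (Rpower_pow 2 (Rpower y _)) by apply exp_pos.
    rewrite Rpower_mult, <- Rpower_pow by lra. f_equal.
    rewrite !S_INR. simpl. field. }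
  rewrite <- E. apply pow_incr. lra.
Qed.
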